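(* Let $\epsilon\le 1/10$ and consider the multi-value algorithm (with suitable constants $c_1,c_2,c_3>0$) against a late $\epsilon$-bounded adaptive blocking adversary. Then, with high probability, $\sigma_1=\Omega(\log n)$.
   Context: Model: $n$ anonymous nodes, fully interconnected, synchronous rounds; in each round every node first receives the non-blocked messages sent to it in the previous round, computes, then sends messages. Late $\epsilon$-bounded adaptive adversary: at the start of each round $t\ge2$ it knows the full system state at the beginning of round $t-1$ and blocks a set $B_t$ of at most $\epsilon n$ nodes in round $t$ (blocked nodes neither send nor receive in that round); in round 1 it knows the initial state but not that round's coin flips. W.h.p. means with probability at least $1-n^{-\Omega(1)}$. Multi-value algorithm (constants $c_1,c_2,c_3>0$; inputs from a domain of size polynomial in $n$; $\bot$ is a special value with $\bot\le x$ for all $x$): (1) every node $u$ initializes $x_u$ to its input and becomes active with probability $c_1\log n/n$, otherwise inactive; (2) each active node sends $x_u$ to $\lceil c_2\log n\rceil$ nodes chosen uniformly at random; (3) every inactive or blocked node $v$ sets $x_v=\bot$; (4) for iterations $t=1,\dots,\lceil c_3\log n\rceil$, every node $v$ sets $x_v=\max(R\cup\{x_v\})$ where $R$ is the set of newly received values, becomes active if $x_v\neq\bot$, and, if $t<c_3\log n$ and $v$ is active, sends $x_v$ to $2$ nodes chosen uniformly at random; (5) finally every node decides on $x_u$. Let $A$ be the set of nodes active in round 1 and $B_1$ the set of nodes blocked in round 1; $x^*$ is the maximum input value among nodes in $A\setminus B_1$; $\sigma_t$ is the number of nodes whose value is $x^*$ at the end of round (iteration) $t$. *)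

(* Defs.v *)
From HB Require Import structures.
From mathcomp Require Import all_boot all_order all_algebra.
From mathcomp Require Import all_classical all_reals all_analysis.
Set Implicit Arguments. Unset Strict Implicit. Unset Printing Implicit Defensive.
Import Order.TTheory GRing.Theory Num.Theory.
Local Open Scope ring_scope.

(* Values are option nat: None plays the role of the special value bot,
   with bot <= x for all x. *)
Definition omax (a b : option nat) : option nat :=
  match a, b with
  | None, _ => b
  | _, None => a
  | Some x, Some y => Some (maxn x y)
  end.

Definition p_act (R : realType) (c1 : R) (n : nat) : R :=
  Num.min 1 (c1 * ln (n%:R) / n%:R).

Definition fanout (R : realType) (c2 : R) (n : nat) : nat :=
  `|Num.ceil (c2 * ln (n%:R))|%N.

(* Random outcome of round 1: each node's activation coin, and for each node
   the list of m = fanout targets, each independently uniform in 'I_n. *)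
Definition outcome (n m : nat) : finType :=
  ({ffun 'I_n -> bool} * {ffun 'I_n -> {ffun 'I_m -> 'I_n}})%type.

Definition weight (R : realType) (p : R) (n m : nat) (w : outcome n m) : R :=
  (\prod_(u : 'I_n) (if w.1 u then p else 1 - p)) * (n%:R^-1) ^+ (n * m).

Definition prob (R : realType) (p : R) (n m : nat) (E : pred (outcome n m)) : R :=
  \sum_(w : outcome n m | E w) weight p w.

Section Exec.
Variables (n m : nat) (x : 'I_n -> nat) (B1 B2 : {set 'I_n}) (w : outcome n m).

(* u is in A \ B1 : active in round 1 and not blocked in round 1 *)
Definition live (u : 'I_n) : bool := w.1 u && (u \notin B1).

Definition val0 (v : 'I_n) : option nat := if live v then Some (x v) else None.

Definition xstar : option nat := \big[omax/None]_(u | live u) Some (x u).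

(* message from u reaches v in round 2 (iteration 1): u is live (sent in
   round 1), chose v as one of its targets, and v is not blocked in round 2 *)
Definition reaches (u v : 'I_n) : bool :=
  [&& live u, v \notin B2 & [exists j : 'I_m, w.2 u j == v]].

Definition val1 (v : 'I_n) : option nat :=
  \big[omax/val0 v]_(u | reaches u v) Some (x u).

Definition sigma1 : nat := #|[set v | (xstar != None) && (val1 v == xstar)]|.

End Exec.

(* Main.v *)
Require Import Defs.
From HB Require Import structures.
From mathcomp Require Import all_boot all_order all_algebra.
From mathcomp Require Import all_classical all_reals all_analysis.
From mathcomp Require Import zify lra.
Import Order.TTheory GRing.Theory Num.Theory.
Local Open Scope ring_scope.


Lemma omaxA : associative omax.
Proof. by case=> [a|] [b|] [c|] //=; rewrite maxnA. Qed.
Lemma omaxC : commutative omax.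
Proof. by case=> [a|] [b|] //=; rewrite maxnC. Qed.
Lemma omax0o : left_id None omax.
Proof. by case. Qed.
HB.instance Definition _ := Monoid.isComLaw.Build (option nat) None omax omaxA omaxC omax0o.

Definition oleS (b : nat) (o : option nat) : bool :=
  if o is Some y then (y <= b)%N else true.

Lemma big_omax_some (I : finType) (P : pred I) (F : I -> nat) i0 :
  P i0 -> (forall i, P i -> (F i <= F i0)%N) ->
  \big[omax/None]_(i | P i) Some (F i) = Some (F i0).
Proof.
move=> Pi0 Hle; rewrite (bigD1 i0) //=.
have : oleS (F i0) (\big[omax/None]_(i | P i && (i != i0)) Some (F i)).
  apply: (big_ind (oleS (F i0))) => //.
    by case=> [a|] [b|] //= ha hb; rewrite geq_max ha hb.
  by move=> i /andP[Pi _] /=; apply: Hle.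
by case: (\big[omax/None]_(i | P i && (i != i0)) Some (F i)) => [y|] //= hy;
  rewrite (maxn_idPl hy).
Qed.

Lemma big_omax_idx (I : finType) (P : pred I) (F : I -> option nat) a :
  \big[omax/a]_(i | P i) F i = omax a (\big[omax/None]_(i | P i) F i).
Proof.
apply: (big_rec2 (fun y1 y2 => y1 = omax a y2)); first by case: a.
move=> i y1 y2 _ ->.
by rewrite omaxA (omaxC (F i) a) -omaxA.
Qed.

Definition img {n m : nat} (g : {ffun 'I_m -> 'I_n}) : {set 'I_n} :=
  [set v | [exists j, g j == v]].

Lemma core n m (x : 'I_n -> nat) (B1 B2 : {set 'I_n}) (w : outcome n m) u :
  live B1 w u -> (forall v, live B1 w v -> (x v <= x u)%N) ->
  xstar x B1 w = Some (x u) /\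
  (#|img (w.2 u) :\: B2| <= sigma1 x B1 B2 w)%N.
Proof.
move=> Lu Hmax.
have XS : xstar x B1 w = Some (x u) by rewrite /xstar; apply: big_omax_some.
split=> //.
rewrite /sigma1; apply: subset_leq_card. apply/fintype.subsetP => v.
rewrite !inE XS /= => /andP[vB2 /existsP[j /eqP Hj]].
rewrite /Defs.val1 big_omax_idx (@big_omax_some _ _ x u).
- rewrite /val0; case: ifP => //= Lv.
  by rewrite (maxn_idPr (Hmax _ Lv)).
- by rewrite /reaches Lu vB2 /=; apply/existsP; exists j; rewrite Hj.
- by move=> i /and3P[Li _ _]; apply: Hmax.
Qed.


Definition ext {T : finType} {m : nat} (a : T) (g : {ffun 'I_m -> T}) :
  {ffun 'I_m.+1 -> T} :=
  [ffun i : 'I_m.+1 => if unlift ord0 i is Some j then g j else a].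

Lemma sum_ffunS (R : realType) (T : finType) m (F : {ffun 'I_m.+1 -> T} -> R) :
  \sum_f F f = \sum_(a : T) \sum_(g : {ffun 'I_m -> T}) F (ext a g).
Proof.
rewrite pair_big /=.
rewrite (reindex (fun p : T * {ffun 'I_m -> T} => ext p.1 p.2)) //=.
exists (fun f : {ffun 'I_m.+1 -> T} => (f ord0, [ffun j => f (lift ord0 j)])).
  move=> [a g] _ /=; congr pair; first by rewrite ffunE unlift_none.
  by apply/ffunP => j; rewrite !ffunE liftK.
move=> f _; apply/ffunP => i; rewrite ffunE.
by case: unliftP => [j ->|->]; rewrite ?ffunE.
Qed.

Lemma img_ext n m (a : 'I_n) (g : {ffun 'I_m -> 'I_n}) :
  img (ext a g) = a |: img g.
Proof.
apply/setP => v; rewrite !inE.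
apply/existsP/orP => [[i]|[/eqP ->|/existsP[j hj]]].
- rewrite ffunE; case: unliftP => [j _|_] h.
    by right; apply/existsP; exists j.
  by left; rewrite eq_sym.
- by exists ord0; rewrite ffunE unlift_none.
- by exists (lift ord0 j); rewrite ffunE liftK.
Qed.

Lemma card_split n (a : 'I_n) (I S : {set 'I_n}) :
  #|(a |: I) :\: S| = ((a \notin S) + #|I :\: (a |: S)|)%N.
Proof.
case: (boolP (a \in S)) => aS /=.
  rewrite add0n; apply: eq_card => v; rewrite !inE.
  by case: eqP => [->|] //=; rewrite aS.
have -> : (a |: I) :\: S = a |: (I :\: (a |: S)).
  apply/setP => v; rewrite !inE.
  by case: eqP => [->|] //=; rewrite (negPf aS).
by rewrite cardsU1 !inE eqxx.
Qed.

Lemma count_bound (R : realType) n (th : R) : 0 <= th -> th <= 1 ->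
  forall m (S : {set 'I_n}),
  \sum_(g : {ffun 'I_m -> 'I_n}) th ^+ #|img g :\: S| <=
  (th * n%:R + (1 - th) * (#|S| + m)%:R) ^+ m.
Proof.
move=> th0 th1; elim=> [|m IH] S.
  rewrite expr0 (eq_bigr (fun _ => 1)); last first.
    move=> g _; suff -> : #|img g :\: S| = 0%N by [].
    by apply: eq_card0 => v; rewrite !inE; apply/negP => /andP[_ /existsP[[]]].
  by rewrite sumr_const card_ffun !card_ord expn0.
have B0 : forall k : nat, 0 <= th * n%:R + (1 - th) * k%:R.
  by move=> k; apply: addr_ge0; apply: mulr_ge0; rewrite ?subr_ge0.
rewrite sum_ffunS.
under eq_bigr => a _ do under eq_bigr => g _ do rewrite img_ext card_split exprD.
under eq_bigr => a _ do rewrite -mulr_sumr.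
set B := th * n%:R + (1 - th) * (#|S| + m.+1)%:R.
apply: (@le_trans _ _ (\sum_(a : 'I_n) th ^+ (a \notin S) * B ^+ m)).
  apply: ler_sum => a _; apply: ler_wpM2l; first exact: exprn_ge0.
  apply: le_trans (IH _) _; apply: lerXn2r; rewrite ?nnegrE ?B0 //.
  rewrite lerD2l; apply: ler_wpM2l; first by rewrite subr_ge0.
  rewrite ler_nat cardsU1; have := leq_b1 (a \notin S); lia.
rewrite -mulr_suml exprS; apply: ler_wpM2r; first by apply: exprn_ge0; rewrite /B B0.
have -> : \sum_(a : 'I_n) th ^+ (a \notin S) =
          \sum_(a : 'I_n) (th + (1 - th) * (a \in S)%:R).
  by apply: eq_bigr => a _; case: (a \in S) => /=; rewrite ?mulr1 ?mulr0 ?addr0 ?expr1 ?expr0 //; rewrite addrC subrK.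
rewrite big_split /= sumr_const card_ord -mulr_sumr.
have -> : \sum_(a : 'I_n) ((a \in S)%:R : R) = #|S|%:R.
  rewrite (eq_bigr (fun a => if a \in S then 1 else 0)); last by move=> a _; case: (a \in S).
  by rewrite -big_mkcond /= sumr_const.
rewrite /B -(mulr_natr th n) lerD2l; apply: ler_wpM2l; first by rewrite subr_ge0.
by rewrite ler_nat leq_addr.
Qed.


Lemma marg (R : realType) (I J : finType) (u : I) (G : J -> R) :
  \sum_(f : {ffun I -> J}) G (f u) = #|J|%:R ^+ #|I|.-1 * \sum_j G j.
Proof.
rewrite (eq_bigr (fun f : {ffun I -> J} => \prod_i (if i == u then G (f i) else 1))); last first.
  by move=> f _; rewrite (bigD1 u) //= eqxx big1 ?mulr1 // => i /negPf ->.
rewrite -(bigA_distr_bigA (fun i j => if i == u then G j else 1)) /=.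
rewrite (bigD1 u) //= eqxx mulrC; congr (_ * _).
rewrite (eq_bigr (fun _ => #|J|%:R)); last first.
  by move=> i /negPf -> ; rewrite sumr_const.
by rewrite prodr_const cardC1.
Qed.

Definition cw {R : realType} (p : R) {I : finType} (f : {ffun I -> bool}) : R :=
  \prod_i (if f i then p else 1 - p).

Lemma coin_total (R : realType) (p : R) (I : finType) :
  \sum_(f : {ffun I -> bool}) cw p f = 1.
Proof.
rewrite /cw -(bigA_distr_bigA (fun i (b : bool) => if b then p else 1 - p)) /=.
by rewrite big1 // => i _; rewrite big_bool /= addrC subrK.
Qed.

Lemma prod01 (R : realType) (I : finType) (c : pred I) :
  \prod_i (if c i then 0 else 1 : R) = (~~ [exists i, c i])%:R.
Proof.
case: existsP => [[i ci]|nc] /=.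
  by rewrite (bigD1 i) //= ci mul0r.
by rewrite big1 // => i _; case: ifP => // ci; case: nc; exists i.
Qed.

Lemma coin_E0 (R : realType) (p : R) (I : finType) (B1 : {set I}) :
  \sum_(f : {ffun I -> bool} | [forall i, (i \notin B1) ==> ~~ f i]) cw p f
  = (1 - p) ^+ #|~: B1|.
Proof.
rewrite big_mkcond /=.
rewrite (eq_bigr (fun f : {ffun I -> bool} => \prod_i ((if f i then p else 1 - p) *
     (if (i \notin B1) && f i then 0 else 1)))); last first.
  move=> f _; rewrite big_split /= prod01 /cw.
  have -> : [forall i, (i \notin B1) ==> ~~ f i] = ~~ [exists i, (i \notin B1) && f i].
    by rewrite negb_exists; apply: eq_forallb => i; case: (i \notin B1); case: (f i).
  by case: ([exists i, (i \notin B1) && f i]) => /=; rewrite ?mulr0 ?mulr1.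
rewrite -(bigA_distr_bigA (fun i (b : bool) => (if b then p else 1 - p) *
     (if (i \notin B1) && b then 0 else 1))) /=.
rewrite -prodr_const [RHS]big_mkcond /=; apply: eq_bigr => i _.
rewrite big_bool /= andbT andbF !inE mulr1.
by case: (i \in B1) => /=; rewrite ?mulr1 ?mulr0 ?add0r // addrC subrK.
Qed.


Lemma asym (R : realType) (n : nat) : (500 * 500 <= n)%N ->
  [/\ 0 <= ln (n%:R : R), 10 * ln (n%:R : R) + 1 <= n%:R / 10 & 2 <= (n%:R : R)].
Proof.
move=> hn.
have nRge : 500 * 500 <= (n%:R : R) by rewrite -natrM ler_nat.
set nR := (n%:R : R) in nRge *.
have nR0 : 0 < nR by lra.
set s := Num.sqrt nR.
have s0 : 0 <= s by apply: sqrtr_ge0.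
have ss : s ^+ 2 = nR by apply: sqr_sqrtr; lra.
have s500 : 500 <= s by nra.
have Ls : ln nR <= 2 * s.
  rewrite -ler_expR lnK ?posrE //.
  rewrite expRM_natl -ss; apply: lerXn2r; rewrite ?nnegrE ?expR_ge0 //.
  by apply: le_trans (expR_ge1Dx s); lra.
have L0 : 0 <= ln nR by apply: ln_ge0; lra.
split => //; last by lra.
nra.
Qed.

Lemma fin_num (R : realType) (z : R) : 0 < z -> z <= 1 / 2 -> z ^+ 3 + z ^+ 3 <= z.
Proof. move=> z0 z2; rewrite !exprS expr0 mulr1; nra. Qed.

Lemma inv_half (R : realType) (a : R) : 2 <= a -> a^-1 <= 1 / 2.
Proof.
move=> a2; have a0 : 0 < a by lra.
have h : a^-1 * a = 1 by rewrite mulVf // gt_eqF.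
have i0 : 0 < a^-1 by rewrite invr_gt0.
nra.
Qed.

Lemma base_le (R : realType) (th nR b mm L : R) : 0 <= th -> th <= 1 / 4 ->
  b <= nR / 10 -> mm <= 10 * L + 1 -> 10 * L + 1 <= nR / 10 -> 0 <= nR ->
  th * nR + (1 - th) * (b + mm) <= nR / 2.
Proof. move=> *; nra. Qed.

Lemma cw_ge0 (R : realType) (p : R) (I : finType) (f : {ffun I -> bool}) :
  0 <= p <= 1 -> 0 <= cw p f.
Proof.
move=> /andP[p0 p1]; apply: prodr_ge0 => i _; case: ifP => // _.
by rewrite subr_ge0.
Qed.

Theorem lemma12 (R : realType) (eps : R) :
  eps <= 1 / 10 ->
  exists c1 c2 c3 : R, [/\ 0 < c1, 0 < c2 & 0 < c3] /\
  exists (c delta : R) (n0 : nat), 0 < c /\ 0 < delta /\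
  forall n : nat, (n0 <= n)%N ->
  forall (x : 'I_n -> nat) (B1 B2 : {set 'I_n}),
    #|B1|%:R <= eps * n%:R -> #|B2|%:R <= eps * n%:R ->
    1 - powR (n%:R) (- delta) <=
    prob (p_act c1 n)
      (fun w : outcome n (fanout c2 n) =>
         (xstar x B1 w != None) && (c * ln (n%:R) <= (sigma1 x B1 B2 w)%:R)).
Proof.
move=> heps.
exists 4, 10, 1; split; first by split.
exists 1, 1, (500 * 500)%N; split; first exact: ltr01.
split; first exact: ltr01.
move=> n hn x B1 B2 hB1 hB2.
have [L0 Lb n2] := asym R n hn.
set m := fanout 10 n.
set p := p_act 4 n.
set nR := (n%:R : R) in L0 Lb n2 hB1 hB2 *.
set L := ln nR in L0 Lb *.
have nR0 : 0 < nR by lra.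
have n0 : (0 < n)%N by rewrite -(ltr0n R).
have nR1 : 0 <= nR by lra.
have b1 : #|B1|%:R <= nR / 10.
  apply: le_trans hB1 _; clear -heps nR1; nra.
have b2 : #|B2|%:R <= nR / 10.
  apply: le_trans hB2 _; clear -heps nR1; nra.
have /andP[mb1 mb2] : 10 * L <= m%:R <= 10 * L + 1.
  rewrite /m /fanout -/nR -/L natr_absz ger0_norm; last by rewrite ceil_ge0; clear -L0; lra.
  have /andP[h1 h2] := ceil_itv (10 * L).
  rewrite intrB in h1; apply/andP; split => //; clear -h1 h2; lra.
have p01 : 0 <= p <= 1.
  rewrite /p /p_act -/nR -/L; apply/andP; split.
    by rewrite le_min ler01 /=; apply: divr_ge0; clear -L0 nR0; lra.
  by rewrite ge_min lexx.
have NE : #|~: B1|%:R = nR - #|B1|%:R.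
  have hc := cardsC B1; rewrite card_ord in hc.
  have : (#|B1| + #|~: B1|)%:R = nR :> R by rewrite hc.
  rewrite natrD; clear; lra.
have pN : 3 * L <= p * #|~: B1|%:R.
  rewrite NE /p /p_act -/nR -/L.
  case: (leP 1 (4 * L / nR)) => h.
    clear -b1 Lb L0; lra.
  idtac.
  have ha : 4 * L / nR * nR = 4 * L by rewrite divfK // gt_eqF.
  have a0 : 0 <= 4 * L / nR by apply: divr_ge0; clear -L0 nR0; lra.
  clear -ha a0 b1 L0 nR0; nra.
set good := fun w : outcome n m =>
  (xstar x B1 w != None) && (1 * L <= (sigma1 x B1 B2 w)%:R).
rewrite powR_inv1 //.
have pairE : forall F : outcome n m -> R, \sum_(w : outcome n m) F w =
   \sum_(w1 : {ffun 'I_n -> bool}) \sum_(w2 : {ffun 'I_n -> {ffun 'I_m -> 'I_n}}) F (w1, w2).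
  by move=> F; rewrite pair_bigA; apply: eq_bigr => -[].
set q0 : R := (nR^-1) ^+ (n * m).
set y : R := nR ^+ m.
have y0 : y != 0 by rewrite expf_neq0 // gt_eqF.
have q0E : q0 = (y^-1) ^+ n by rewrite /q0 mulnC exprM exprVn.
have Q1 : q0 * y ^+ n = 1 by rewrite q0E -exprMn mulVf // expr1n.
have Q2 : q0 * y ^+ n.-1 = y^-1.
  by rewrite q0E -(prednK n0) exprS -mulrA -exprMn mulVf // expr1n mulr1.
have cardW : #|{ffun 'I_n -> {ffun 'I_m -> 'I_n}}|%:R = y ^+ n :> R.
  by rewrite !card_ffun !card_ord !natrX.
have tot : \sum_(w : outcome n m) weight p w = 1.
  rewrite pairE -[RHS](coin_total _ p 'I_n); apply: eq_bigr => w1 _.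
  rewrite (eq_bigr (fun _ => cw p w1 * q0)) // sumr_const -mulr_natr cardW.
  by rewrite -mulrA Q1 mulr1.
set E0 := fun w1 : {ffun 'I_n -> bool} => [forall i, (i \notin B1) ==> ~~ w1 i].
set qF := y^-1 * \sum_(g : {ffun 'I_m -> 'I_n})
             (if #|img g :\: B2|%:R < L then 1 else 0 : R).
have qF0 : 0 <= qF.
  apply: mulr_ge0; first by rewrite invr_ge0 exprn_ge0.
  by apply: sumr_ge0 => g _; case: ifP.
have perw1 : forall w1, \sum_(w2 : {ffun 'I_n -> {ffun 'I_m -> 'I_n}})
      (if ~~ good (w1, w2) then cw p w1 * q0 else 0) <=
      cw p w1 * ((E0 w1)%:R + qF).
  move=> w1.
  have cw0 := @cw_ge0 _ _ _ w1 p01.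
  have q00 : 0 <= q0 by rewrite /q0 exprn_ge0 // invr_ge0.
  case E : (E0 w1).
    apply: (@le_trans _ _ (\sum_(w2 : {ffun 'I_n -> {ffun 'I_m -> 'I_n}}) cw p w1 * q0)).
      apply: ler_sum => w2 _; case: ifP => _ //; exact: mulr_ge0.
    rewrite sumr_const -(mulr_natr (cw p w1 * q0)) (_ : #|xpredT| = #|{ffun 'I_n -> {ffun 'I_m -> 'I_n}}|); last by apply: eq_card.
    rewrite cardW -mulrA Q1 mulr1 /= mulrDr mulr1 lerDl.
    exact: mulr_ge0.
  move/negbT: E; rewrite /E0 negb_forall => /existsP[u0 hu0].
  have Lu0 : w1 u0 && (u0 \notin B1).
    by move: hu0; case: (u0 \notin B1); case: (w1 u0).
  pose us := [arg max_(i > u0 | w1 i && (i \notin B1)) x i].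
  have [Lus Hmax] : (w1 us && (us \notin B1)) /\
      forall v, w1 v && (v \notin B1) -> (x v <= x us)%N.
    by rewrite /us; case: arg_maxnP => // i Li Hi; split => // v Lv; exact: Hi.
  apply: (@le_trans _ _ (\sum_(w2 : {ffun 'I_n -> {ffun 'I_m -> 'I_n}})
      cw p w1 * q0 * (if #|img (w2 us) :\: B2|%:R < L then 1 else 0))).
    apply: ler_sum => w2 _.
    case: ifP => hg; last first.
      by apply: mulr_ge0; [exact: mulr_ge0 | case: ifP].
    case: ifP => hX; first by rewrite mulr1.
    exfalso.
    have [XS Xle] := @core n m x B1 B2 (w1, w2) us Lus Hmax.
    move: hg; rewrite /good XS /= mul1r.
    have -> // : L <= (sigma1 x B1 B2 (w1, w2))%:R.
    apply: le_trans (_ : (#|img (w2 us) :\: B2|%:R) <= _); last by rewrite ler_nat.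
    by rewrite leNgt hX.
  rewrite -mulr_sumr (@marg _ _ _ us (fun g => if #|img g :\: B2|%:R < L then 1 else 0 : R)).
  rewrite card_ffun !card_ord natrX -/y mulrA -(mulrA (cw p w1)) Q2 /= add0r.
  by rewrite -mulrA.
have bad : prob p (fun w => ~~ good w) <= (1 - p) ^+ #|~: B1| + qF.
  rewrite /prob big_mkcond pairE.
  apply: (@le_trans _ _ (\sum_(w1 : {ffun 'I_n -> bool}) cw p w1 * ((E0 w1)%:R + qF))).
    by apply: ler_sum => w1 _; apply: perw1.
  under eq_bigr => w1 _ do rewrite mulrDr.
  rewrite big_split /= -mulr_suml (coin_total _ p) mul1r lerD2r.
  rewrite -(coin_E0 _ p _ B1) [X in _ <= X]big_mkcond /=.
  by rewrite le_eqVlt; apply/orP; left; apply/eqP/eq_bigr => w1 _; rewrite /E0; case: ifP => _; rewrite ?mulr1 ?mulr0.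
have e3 : expR (3%:R * - L) = nR^-1 ^+ 3.
  by rewrite expRM_natl expRN lnK // posrE.
have T1 : (1 - p) ^+ #|~: B1| <= expR (3%:R * - L).
  apply: (@le_trans _ _ (expR (- p) ^+ #|~: B1|)).
    apply: lerXn2r; rewrite ?nnegrE ?expR_ge0 ?subr_ge0 //; first by case/andP: p01.
    exact: expR_ge1Dx.
  by rewrite -expRM_natl ler_expR; clear -pN; lra.
have th0 : 0 <= expR (-2 : R) by apply: expR_ge0.
have e2 : 4 <= expR (2 : R).
  have -> : (2 : R) = 2%:R * 1 by rewrite mulr1.
  rewrite expRM_natl; have h := expR_ge1Dx (1 : R).
  have -> : (4 : R) = 2 ^+ 2 by rewrite expr2; clear; lra.
  by apply: lerXn2r; rewrite ?nnegrE //; clear -h; lra.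
have th4 : expR (-2 : R) <= 1 / 4.
  have hm : expR (-2 : R) * expR 2 = 1 by rewrite -expRD addNr expR0.
  clear -hm th0 e2; nra.
have T2 : qF <= expR (3%:R * - L).
  have S1 : \sum_(g : {ffun 'I_m -> 'I_n})
             (if #|img g :\: B2|%:R < L then 1 else 0 : R) <=
            expR (2 * L) * (nR / 2) ^+ m.
    apply: (@le_trans _ _ (\sum_(g : {ffun 'I_m -> 'I_n})
              expR (2 * L) * expR (-2) ^+ #|img g :\: B2|)).
      apply: ler_sum => g _; case: ifP => hX; last first.
        by apply: mulr_ge0; [exact: expR_ge0 | exact: exprn_ge0].
      rewrite -expRM_natl -expRD; apply: le_trans (expR_ge1Dx _); clear -hX; lra.
    rewrite -mulr_sumr; apply: ler_wpM2l; first exact: expR_ge0.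
    apply: le_trans (@count_bound _ _ _ th0 _ m B2) _; first by clear -th4; lra.
    apply: lerXn2r; rewrite ?nnegrE.
    - apply: addr_ge0; first exact: mulr_ge0.
      apply: mulr_ge0; first by clear -th4; lra. by [].
    - clear -nR1; lra.
    by rewrite natrD -/nR; exact: (@base_le R _ _ _ _ L th0 th4 b2 mb2 Lb nR1).
  rewrite /qF; apply: (@le_trans _ _ (y^-1 * (expR (2 * L) * (nR / 2) ^+ m))).
    by apply: ler_wpM2l => //; rewrite invr_ge0 exprn_ge0.
  rewrite exprMn -/y (mulrCA y^-1) (mulrA y^-1) mulVf // mul1r.
  apply: (@le_trans _ _ (expR (2 * L) * expR (- 2^-1) ^+ m)).
    apply: ler_wpM2l; first exact: expR_ge0.
    apply: lerXn2r; rewrite ?nnegrE ?expR_ge0 ?invr_ge0 //.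
    by apply: le_trans (expR_ge1Dx _); clear; lra.
  by rewrite -expRM_natl -expRD ler_expR; clear -mb1; lra.
have fin : (1 - p) ^+ #|~: B1| + qF <= nR^-1.
  apply: le_trans (lerD T1 T2) _; rewrite e3.
  apply: fin_num; first by rewrite invr_gt0.
  exact: inv_half.
have sp : prob p good + prob p (fun w => ~~ good w) = 1.
  by rewrite /prob -tot [in RHS](bigID good) /=.
clear -sp bad fin; lra.
Qed.
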